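(* Let $X$ be an infinite dimensional separable Banach space and $T:X\to X$ a continuous linear operator such that $(X,T)$ is topologically transitive. Then $(X,T)$ is thickly multi-sensitive: there exists $\delta>0$ such that $\bigcap_{i=1}^kS_T(U_i,\delta)$ is thick for every finite collection of nonempty open sets $U_1,\dots,U_k\subset X$.
   Context: $(X,T)$ is topologically transitive if $\{n\in\mathbb{Z}_+:U\cap T^{-n}V\neq\varnothing\}\neq\varnothing$ for all nonempty open $U,V\subset X$. $S_T(U,\delta)=\{n\in\mathbb{Z}_+:\exists x_1,x_2\in U,\ \|T^nx_1-T^nx_2\|>\delta\}$. A set $F\subset\mathbb{Z}_+$ is thick if it contains arbitrarily long runs of consecutive integers. *)

(* Defs.v *)
From HB Require Import structures.
From mathcomp Require Import all_boot all_order all_algebra.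
From mathcomp Require Import all_classical all_reals all_analysis.
Set Implicit Arguments. Unset Strict Implicit. Unset Printing Implicit Defensive.
Import Order.TTheory GRing.Theory Num.Theory.
Import numFieldNormedType.Exports.
Local Open Scope classical_set_scope.
Local Open Scope ring_scope.

Definition infinite_dimensional (R : realType) (X : normedModType R) : Prop :=
  forall s : seq X, exists x : X,
    forall c : nat -> R, x <> \sum_(i < size s) c i *: s`_i.

Definition separable (T : topologicalType) : Prop :=
  exists D : set T, countable D /\ dense D.

Definition top_transitive (X : topologicalType) (T : X -> X) : Prop :=
  forall U V : set X, open U -> U !=set0 -> open V -> V !=set0 ->
    exists n : nat, (U `&` (iter n T) @^-1` V) !=set0.

Definition S_T (R : realType) (X : normedModType R) (T : X -> X)
    (U : set X) (delta : R) : set nat :=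
  [set n | exists x1 x2, U x1 /\ U x2 /\ delta < `|iter n T x1 - iter n T x2|].

Definition thick (F : set nat) : Prop :=
  forall m : nat, exists a : nat, forall j : nat, (j < m)%N -> F (a + j)%N.

Definition thickly_multi_sensitive (R : realType) (X : normedModType R)
    (T : X -> X) : Prop :=
  exists2 delta : R, 0 < delta &
    forall (k : nat) (U : nat -> set X),
      (forall i, (i < k)%N -> open (U i) /\ U i !=set0) ->
      thick [set n | forall i, (i < k)%N -> S_T T (U i) delta n].

(* Main.v *)
Require Import Defs.
From HB Require Import structures.
From mathcomp Require Import all_boot all_order all_algebra.
From mathcomp Require Import all_classical all_reals all_analysis.
From mathcomp Require Import lra zify.
Import Order.TTheory GRing.Theory Num.Theory.
Import numFieldNormedType.Exports.
Local Open Scope classical_set_scope.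
Local Open Scope ring_scope.

Section Aux.
Variables (R : realType) (X : normedModType R) (T : {linear X -> X}).

Lemma iter_linD n (u v : X) : iter n T (u + v) = iter n T u + iter n T v.
Proof. by elim: n => //= n ->; rewrite linearD. Qed.

Lemma iter_linN n (u : X) : iter n T (- u) = - iter n T u.
Proof. by elim: n => //= n ->; rewrite linearN. Qed.

Lemma balls_exist (U : nat -> set X) k :
  (forall i, (i < k)%N -> open (U i) /\ U i !=set0) ->
  exists2 e : R, 0 < e & forall i, (i < k)%N ->
    exists x, forall y, `|y| < e -> U i (x + y).
Proof.
elim: k => [|k IH] H.
  by exists 1 => // i.
have [e e0 He] := IH (fun i ik => H i (ltnW ik)).
have [Uo [x Ux]] := H k (ltnSn k).
have : nbhs x (U k) by apply: open_nbhs_nbhs; split.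
move=> /nbhs_ballP [d d0 Hd].
exists (Num.min e d); first by rewrite lt_min e0 d0.
move=> i; rewrite ltnS leq_eqVlt => /orP [/eqP ->|ik].
  exists x => y yd; apply: Hd; rewrite -ball_normE /ball_ /=.
  rewrite opprD addrA subrr sub0r normrN.
  by apply: (lt_le_trans yd); rewrite ge_min lexx orbT.
have [z Hz] := He i ik; exists z => y yd; apply: Hz.
by apply: (lt_le_trans yd); rewrite ge_min lexx.
Qed.

Lemma iter_bound (c : R) (c0 : 0 <= c) (Hc : forall z, `|T z| <= c * `|z|) l (z : X) :
  `|iter l T z| <= c ^+ l * `|z|.
Proof.
elim: l => [|l IH] /=; first by rewrite expr0 mul1r.
apply: (le_trans (Hc _)).
by rewrite exprS -mulrA ler_wpM2l.
Qed.

Lemma core (c : R) (c1 : 1 <= c) (Hc : forall z, `|T z| <= c * `|z|)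
  (e : R) (e0 : 0 < e) (m : nat) (e1 : X) (ne : e1 != 0) :
  top_transitive T ->
  exists y a, `|y| < e /\ forall j, (j < m)%N -> 1 <= `|iter (a + j) T y|.
Proof.
move=> tr.
have c0 : 0 <= c by apply: le_trans c1.
set C := c ^+ m.
have C1 : 1 <= C by rewrite exprn_ege1.
have C0 : 0 < C by apply: lt_le_trans C1.
have Cb : forall l z, (l <= m)%N -> `|iter l T z| <= C * `|z|.
  move=> l z lm; have := iter_bound _ c0 Hc l z. move=> HH. apply: (le_trans HH).
  by rewrite ler_wpM2r // ler_weXn2l.
set K := C * (C * e + 1).
have ne1 : 0 < `|e1| by rewrite normr_gt0.
set z := ((K + 1) / `|e1|) *: e1.
have Ce0 : 0 <= C * e by rewrite mulr_ge0 // ltW.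
have K0 : 0 <= K by apply: mulr_ge0; [exact: ltW | lra].
have nz : `|z| = K + 1.
  rewrite normrZ ger0_norm; first by rewrite divfK // lt0r_neq0.
  by apply: divr_ge0; [lra | exact: ltW].
have [N [y [yU yV]]] : exists N y, ball (0 : X) e y /\ ball z 1 (iter N T y).
  have [N [y [Hy1 Hy2]]] := tr (ball 0 e) (ball z 1) (@ball_open _ _ 0 e)
    (ex_intro _ 0 (ballxx _ e0)) (@ball_open _ _ z 1) (ex_intro _ z (ballxx _ ltr01)).
  by exists N, y.
move: yU yV; rewrite -ball_normE /ball_ /= sub0r normrN => yU yV.
have big : K < `|iter N T y|.
  have := ler_normD (z - iter N T y) (iter N T y).
  rewrite subrK nz => H; lra.
have mN : (m <= N)%N.
  rewrite leqNgt; apply/negP => Nm.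
  have := Cb N y (ltnW Nm).
  have : C * `|y| <= C * e by rewrite ler_wpM2l ?ltW.
  have : C * e <= K.
    have : 1 * (C * e + 1) <= C * (C * e + 1) by rewrite ler_wpM2r //; lra.
    rewrite /K; lra.
  lra.
exists y, (N.+1 - m)%N; split => // j jm.
have HN : N = ((N - (N.+1 - m + j)) + (N.+1 - m + j))%N by rewrite subnK //; lia.
have := Cb (N - (N.+1 - m + j))%N (iter (N.+1 - m + j) T y) ltac:(lia).
rewrite -iterD -HN => H.
have : C * (C * e + 1) < C * `|iter (N.+1 - m + j) T y| by apply: lt_le_trans H.
rewrite ltr_pM2l // => H2; lra.
Qed.

End Aux.

Theorem proposition7p2 (R : realType) (X : completeNormedModType R)
  (T : {linear X -> X}) :
  infinite_dimensional X -> separable X -> continuous T ->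
  top_transitive T -> thickly_multi_sensitive T.
Proof.
move=> infd _ Tc tr.
have [e1 He1] := infd [::].
have ne : e1 != 0.
  apply/eqP => E; apply: (He1 (fun _ => 0)); by rewrite E big_ord0.
have := (linear_bounded_continuous T).2 Tc.
move=> /linear_boundedP /pinfty_ex_gt0 [r r0 Hr].
set c := Num.max r 1.
have c1 : 1 <= c by rewrite le_max lexx orbT.
have Hc : forall z, `|T z| <= c * `|z|.
  move=> z; apply: (le_trans (Hr z)); rewrite ler_wpM2r //.
  by rewrite le_max lexx.
exists 1; first exact: ltr01.
move=> k U HU m.
have [e e0 He] := @balls_exist _ _ _ _ HU.
have [y [a [ye Hy]]] := @core _ _ T c c1 Hc e e0 m e1 ne tr.
exists a => j jm i ik.
have [x Hx] := He i ik.
exists (x + y), (x + - y); split; first exact: Hx.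
split; first by apply: Hx; rewrite normrN.
rewrite !iter_linD iter_linN opprD opprK addrAC addrA subrr add0r.
have := Hy j jm; rewrite -mulr2n normrMn mulr2n; lra.
Qed.
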